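(* Let $G$ be a stacked $4$-polytopal graph. If $G$ has an induced subgraph isomorphic to $G_3\star G_6$ for some graph $G_3$ on $3$ vertices and some graph $G_6$ on $6$ vertices, then $G$ has an induced subgraph isomorphic to $K_3\star P_6$.
   Context: A stacked $4$-polytopal graph is the $1$-skeleton of a stacked $4$-polytope, i.e. of a simplicial $4$-polytope obtained from a $4$-simplex by repeatedly gluing a new $4$-simplex onto a facet. $K_3$ is the triangle, $P_6$ the path on $6$ vertices, $\star$ the graph join. *)

(* Defs.v *)
From mathcomp Require Import all_boot.
Set Implicit Arguments. Unset Strict Implicit. Unset Printing Implicit Defensive.

(* State: number of vertices n (vertices 0..n-1), adjacency relation on nat,
   and the set of facets (tetrahedra), each facet a strictly increasing
   list of 4 vertices.  Stacking on facet F adds vertex n adjacent to the vertices of F;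
   F stops being a facet and the 4 facets (F \ {x}) u {n} appear. *)

Definition simplex_edges : rel nat := fun i j => [&& i < 5, j < 5 & i != j].
Definition simplex_facets : pred (seq nat) :=
  fun F => [&& sorted ltn F, size F == 4 & all (fun i => i < 5) F].

Definition stack_edges (n : nat) (e : rel nat) (F : seq nat) : rel nat :=
  fun i j => [|| e i j, (i == n) && (j \in F) | (j == n) && (i \in F)].
Definition stack_facets (n : nat) (f : pred (seq nat)) (F : seq nat)
  : pred (seq nat) :=
  fun G => (f G && (G != F)) || has (fun x => G == rcons (rem x F) n) F.

Inductive stacked4 : nat -> rel nat -> pred (seq nat) -> Prop :=
| stacked4_simplex : stacked4 5 simplex_edges simplex_facets
| stacked4_stack n e f F :
    stacked4 n e f -> f F ->
    stacked4 n.+1 (stack_edges n e F) (stack_facets n f F).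

Definition stacked4_polytopal_graph (V : finType) (E : rel V) : Prop :=
  exists n e f (h : V -> nat),
    [/\ stacked4 n e f, injective h,
        (forall v, h v < n), (forall i, i < n -> exists v, h v = i)
      & forall u v, E u v = e (h u) (h v)].

Definition simple_graph (V : Type) (E : rel V) : Prop :=
  (forall u v, E u v = E v u) /\ (forall v, ~~ E v v).

Definition has_induced (V W : finType) (E : rel V) (H : rel W) : Prop :=
  exists phi : W -> V, injective phi /\ forall a b, E (phi a) (phi b) = H a b.

Definition gjoin (A B : finType) (EA : rel A) (EB : rel B) : rel (A + B) :=
  fun x y => match x, y with
             | inl a, inl a' => EA a a'
             | inr b, inr b' => EB b b'
             | _, _ => true
             end.

Definition K3 : rel 'I_3 := fun i j => i != j.
Definition P6 : rel 'I_6 := fun i j => ((i : nat).+1 == j) || ((j : nat).+1 == i).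

(* Main.v *)
Require Import Defs.
From mathcomp Require Import all_boot.
From mathcomp Require Import zify.
Set Implicit Arguments. Unset Strict Implicit. Unset Printing Implicit Defensive.

Definition PathInv (e : rel nat) (f : pred (seq nat)) a b c (s : seq nat) : Prop :=
 [/\ uniq s, 1 < size s, (forall x, (x \in s) = [&& e a x, e b x & e c x]),
     (forall i j, i < size s -> j < size s ->
        e (nth 0 s i) (nth 0 s j) = (i.+1 == j) || (j.+1 == i))
   & (forall G, f G -> a \in G -> b \in G -> c \in G ->
        (head 0 s \in G) || (last 0 s \in G))].

Lemma head_rev (s : seq nat) : head 0 (rev s) = last 0 s.
Proof. by case/lastP: s => [|s x] //; rewrite rev_rcons last_rcons. Qed.

Lemma last_rev (s : seq nat) : last 0 (rev s) = head 0 s.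
Proof. by case: s => [|x s] //; rewrite rev_cons last_rcons. Qed.

Lemma idx_rev k i j : i < k -> j < k ->
  ((k - i.+1).+1 == k - j.+1) || ((k - j.+1).+1 == k - i.+1) =
  (i.+1 == j) || (j.+1 == i).
Proof.
move=> hi hj; apply/orP/orP; case=> /eqP H;
  first [left; apply/eqP; lia | right; apply/eqP; lia].
Qed.

Lemma PathInv_rev e f a b c s : PathInv e f a b c s -> PathInv e f a b c (rev s).
Proof.
case=> u sz m ed fa; split.
- by rewrite rev_uniq.
- by rewrite size_rev.
- by move=> x; rewrite mem_rev.
- move=> i j; rewrite size_rev => hi hj.
  rewrite !nth_rev // ed; last 2 first.
  + lia.
  + lia.
  by rewrite idx_rev.
- move=> G fG aG bG cG; rewrite head_rev last_rev orbC; exact: fa.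
Qed.

Lemma PathInv_sw12 e f a b c s : PathInv e f a b c s -> PathInv e f b a c s.
Proof.
case=> u sz m ed fa; split => //.
- by move=> x; rewrite m; case: (e a x); case: (e b x).
- by move=> G fG aG bG cG; apply: fa.
Qed.

Lemma PathInv_sw23 e f a b c s : PathInv e f a b c s -> PathInv e f a c b s.
Proof.
case=> u sz m ed fa; split => //.
- by move=> x; rewrite m; case: (e c x); case: (e b x).
- by move=> G fG aG bG cG; apply: fa.
Qed.

Lemma PathInv_no3 e f a b c s x y z : PathInv e f a b c s ->
  x \in s -> y \in s -> z \in s -> x != y -> y != z -> x != z ->
  e x y -> e y z -> e x z -> False.
Proof.
case=> u sz m ed fa xs ys zs nxy nyz nxz.
rewrite -(nth_index 0 xs) -(nth_index 0 ys) -(nth_index 0 zs).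
have ix := index_mem x s; have iy := index_mem y s; have iz := index_mem z s.
rewrite xs in ix; rewrite ys in iy; rewrite zs in iz.
rewrite !ed //.
have H1 : index x s != index y s.
  by apply: contra nxy => /eqP h; rewrite -(nth_index 0 xs) h nth_index.
have H2 : index y s != index z s.
  by apply: contra nyz => /eqP h; rewrite -(nth_index 0 ys) h nth_index.
have H3 : index x s != index z s.
  by apply: contra nxz => /eqP h; rewrite -(nth_index 0 xs) h nth_index.
move: H1 H2 H3; move: (index x s) (index y s) (index z s) => i j k.
move=> /eqP ? /eqP ? /eqP ? /orP[] /eqP ? /orP[] /eqP ? /orP[] /eqP ?; lia.
Qed.

Lemma sorted_rcons_lt s n : sorted ltn s -> all (fun x => x < n) s -> sorted ltn (rcons s n).
Proof.
case: s => [|x s] // hs ha; rewrite /= rcons_path; move: hs => /= ->.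
have : last x s \in x :: s by exact: mem_last.
by move=> h; have := allP ha _ h.
Qed.

Record Inv n (e : rel nat) (f : pred (seq nat)) : Prop := {
  isym : forall x y, e x y = e y x;
  iirr : forall x, ~~ e x x;
  ibnd : forall x y, e x y -> x < n;
  ifac : forall G, f G -> [/\ sorted ltn G, size G = 4, all (fun x => x < n) G &
           forall x y, x \in G -> y \in G -> x != y -> e x y];
  ichord : forall a b c d, e a b -> e b c -> e c d -> e d a -> a != c -> b != d ->
           e a c || e b d;
  ipath : forall a b c, e a b -> e b c -> e a c -> exists s, PathInv e f a b c s }.

Lemma filter_size (L R : seq nat) : uniq L -> uniq R -> {subset R <= L} ->
  size (filter (fun x => x \notin R) L) = size L - size R.
Proof.
move=> uL uR sRL.
have hp : perm_eq (filter (mem R) L) R.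
  apply: uniq_perm; [exact: filter_uniq|exact: uR|].
  move=> x; rewrite mem_filter; have -> : mem R x = (x \in R) by [].
  by case xR: (x \in R); rewrite ?andbF ?(sRL _ xR).
have := count_predC (mem R) L; rewrite -!size_filter (perm_size hp).
move=> <-; rewrite addKn; congr size; exact: eq_filter.
Qed.

Lemma two_edges (e : rel nat) s : size s = 2 -> uniq s ->
  (forall x y, x \in s -> y \in s -> x != y -> e x y) -> (forall x, ~~ e x x) ->
  forall i j, i < 2 -> j < 2 -> e (nth 0 s i) (nth 0 s j) = (i.+1 == j) || (j.+1 == i).
Proof.
case: s => [|u [|v [|w s]]] //= _; rewrite !inE andbT => nuv cl irr.
case=> [|[|i]] [|[|j]] //= _ _; rewrite ?(negbTE (irr _)) //; apply: cl;
  rewrite ?inE ?eqxx ?orbT //; rewrite eq_sym //.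
Qed.

Lemma two_headlast (s : seq nat) w : size s = 2 -> w \in s ->
  (head 0 s == w) || (last 0 s == w).
Proof.
by case: s => [|u [|v [|x s]]] //= _; rewrite !inE => /orP[] /eqP ->; rewrite eqxx ?orbT.
Qed.

Lemma exists_other (G R : seq nat) : uniq G -> size R < size G ->
  exists2 w, w \in G & w \notin R.
Proof.
move=> uG hs; case: (boolP (all (mem R) G)) => [/allP h|/allPn [w wG wn]].
  by have := uniq_leq_size uG h; rewrite leqNgt hs.
by exists w.
Qed.

Lemma base_inv : Inv 5 simplex_edges simplex_facets.
Proof.
split.
- by move=> x y; rewrite /simplex_edges eq_sym; case: (x < 5); case: (y < 5).
- by move=> x; rewrite /simplex_edges eqxx !andbF.
- by move=> x y /and3P[].
- move=> G /and3P[hs /eqP hz ha]; split => //.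
  move=> x y xG yG nxy; rewrite /simplex_edges nxy (allP ha _ xG) (allP ha _ yG).
  done.
- move=> a b c d /and3P[ha hb _] /and3P[_ hc _] _ _ nac _.
  by rewrite /simplex_edges ha hc nac.
- move=> a b c /and3P[ha hb nab] /and3P[_ hc nbc] /and3P[_ _ nac].
  have uR : uniq [:: a; b; c] by rewrite /= !inE negb_or nab nac nbc.
  set s := filter (fun x => x \notin [:: a; b; c]) (iota 0 5).
  have sz : size s = 2.
    rewrite /s filter_size ?iota_uniq // ?size_iota //.
    by move=> x; rewrite mem_iota add0n !inE => /or3P[] /eqP ->; rewrite ?ha ?hb ?hc.
  have ms : forall x, (x \in s) = [&& simplex_edges a x, simplex_edges b x & simplex_edges c x].
    move=> x; rewrite /s mem_filter mem_iota /simplex_edges ha hb hc !inE /=.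
    rewrite !(eq_sym x); case: (x < 5); rewrite ?andbF //.
    by case: (a == x); case: (b == x); case: (c == x).
  exists s; split.
  + exact/filter_uniq/iota_uniq.
  + by rewrite sz.
  + exact: ms.
  + rewrite sz; apply: two_edges => //; first exact/filter_uniq/iota_uniq.
      move=> x y; rewrite !ms => /and3P[/and3P[_ hx _] _ _] /and3P[/and3P[_ hy _] _ _] nxy.
      by rewrite /simplex_edges hx hy nxy.
    by move=> x; rewrite /simplex_edges eqxx !andbF.
  + move=> G /and3P[hs /eqP hz hA] aG bG cG.
    have uG : uniq G := sorted_uniq ltn_trans ltnn hs.
    have [w wG wn] : exists2 w, w \in G & w \notin [:: a; b; c].
      by apply: exists_other; rewrite ?hz.
    have ws : w \in s.
      rewrite /s mem_filter wn mem_iota /=; exact: (allP hA _ wG).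
    by case/orP: (two_headlast sz ws) => /eqP ->; rewrite wG ?orbT.
Qed.

Lemma two_pick (s : seq nat) y (P : pred nat) : size s = 2 -> uniq s ->
  (forall w, w \in s -> w != y -> P w) -> P (head 0 s) || P (last 0 s).
Proof.
case: s => [|u [|v [|x s]]] //= _; rewrite inE andbT => nuv H.
case: (eqVneq u y) => [euy|nuy].
  rewrite (H v) ?orbT // ?inE ?eqxx ?orbT //.
  by rewrite -euy eq_sym.
by rewrite (H u) // inE eqxx.
Qed.

Lemma head_in (s : seq nat) : 0 < size s -> head 0 s \in s.
Proof. by case: s => //= x s _; rewrite inE eqxx. Qed.

Lemma last_in (s : seq nat) : 0 < size s -> last 0 s \in s.
Proof. by case: s => //= x s _; exact: mem_last. Qed.

Lemma last_cons_ne (s : seq nat) n : 0 < size s -> last 0 (n :: s) = last 0 s.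
Proof. by case: s. Qed.

Section Step.
Variables (n : nat) (e : rel nat) (f : pred (seq nat)) (F : seq nat).
Hypothesis I : Inv n e f.
Hypothesis fF : f F.

Let e' := stack_edges n e F.
Let f' := stack_facets n f F.

Let Fs : sorted ltn F. Proof. by case: (ifac I fF). Qed.
Let Fz : size F = 4. Proof. by case: (ifac I fF). Qed.
Let FA : forall x, x \in F -> x < n.
Proof. by case: (ifac I fF) => _ _ /allP. Qed.
Let Fcl : forall x y, x \in F -> y \in F -> x != y -> e x y.
Proof. by case: (ifac I fF). Qed.
Let Fu : uniq F. Proof. exact: (sorted_uniq ltn_trans ltnn Fs). Qed.
Let hnF : n \notin F. Proof. by apply/negP => /FA; rewrite ltnn. Qed.
Let Fne : forall x, x \in F -> x != n.
Proof. by move=> x /FA; rewrite neq_ltn => ->. Qed.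
Let eLl : forall x y, e x y -> x < n. Proof. exact: ibnd I. Qed.
Let eLr : forall x y, e x y -> y < n.
Proof. by move=> x y; rewrite (isym I) => /eLl. Qed.
Let Fadj : forall x y, x \in F -> y \in F -> e x y = (x != y).
Proof.
move=> x y xF yF; case: (eqVneq x y) => [->|nxy]; first exact/negbTE/(iirr I).
exact: Fcl.
Qed.

Lemma e'E x y : x != n -> y != n -> e' x y = e x y.
Proof. by move=> /negbTE hx /negbTE hy; rewrite /e' /stack_edges hx hy !orbF. Qed.

Lemma e'n y : e' n y = (y \in F).
Proof.
rewrite /e' /stack_edges eqxx /=.
case: (boolP (e n y)) => [/eLl|_]; first by rewrite ltnn.
by rewrite (negbTE hnF) andbF orbF.
Qed.

Lemma e'sym x y : e' x y = e' y x.
Proof.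
rewrite /e' /stack_edges (isym I x y); congr (_ || _); exact: orbC.
Qed.

Lemma e'nr x : e' x n = (x \in F).
Proof. by rewrite e'sym e'n. Qed.

Lemma e'W x y : e x y -> e' x y.
Proof. by rewrite /e' /stack_edges => ->. Qed.

Lemma e'irr x : ~~ e' x x.
Proof.
case: (eqVneq x n) => [->|xn]; first by rewrite e'n.
rewrite e'E //; exact: (iirr I x).
Qed.

Lemma e'lt x y : e' x y -> x < n.+1.
Proof.
case: (eqVneq x n) => [->//|xn].
case: (eqVneq y n) => [->|yn]; first by rewrite e'nr => /FA /ltnW.
by rewrite e'E // => /eLl /ltnW.
Qed.


Lemma f'fac G : f' G -> [/\ sorted ltn G, size G = 4, all (fun x => x < n.+1) G &
           forall x y, x \in G -> y \in G -> x != y -> e' x y].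
Proof.
case/orP => [/andP[fG _]|/hasP[y yF /eqP ->]].
  case: (ifac I fG) => sG zG aG cG; split => //.
    by apply/allP => x /(allP aG) /ltnW.
  by move=> x z xG zzG nxz; apply: e'W; apply: cG.
have remF : forall x, x \in rem y F -> x \in F by move=> x; apply: mem_rem.
split.
- apply: sorted_rcons_lt; first exact: (subseq_sorted ltn_trans (rem_subseq y F) Fs).
  by apply/allP => x /remF /FA.
- by rewrite size_rcons size_rem // Fz.
- rewrite all_rcons ltnSn /=; apply/allP => x /remF /FA /ltnW //.
- move=> x z; rewrite !mem_rcons !inE.
  case/orP => [/eqP ->|/remF xF]; case/orP => [/eqP ->|/remF zF].
  + by rewrite eqxx.
  + by rewrite e'n.
  + by rewrite e'nr.
  + by move=> nxz; apply: e'W; apply: Fcl.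
Qed.

Lemma f'chord a b c d : e' a b -> e' b c -> e' c d -> e' d a -> a != c -> b != d ->
  e' a c || e' b d.
Proof.
case: (eqVneq a n) => [->|an].
  rewrite e'n e'nr => bF _ _ dF _ nbd.
  by rewrite (e'W (Fcl bF dF nbd)) orbT.
case: (eqVneq b n) => [->|bn].
  rewrite e'n e'nr => aF cF _ _ nac _.
  by rewrite e'W //; apply: Fcl.
case: (eqVneq c n) => [->|cn].
  rewrite e'n e'nr => _ bF dF _ _ nbd.
  by rewrite (e'W (Fcl bF dF nbd)) orbT.
case: (eqVneq d n) => [->|dn].
  rewrite e'n e'nr => _ _ cF aF nac _.
  by rewrite e'W //; apply: Fcl.
rewrite !e'E // => h1 h2 h3 h4 nac nbd.
exact: (ichord I h1 h2 h3 h4 nac nbd).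
Qed.

Lemma f'mem_new y G : y \in F -> G = rcons (rem y F) n -> forall x, x \in G -> x != n -> x \in F.
Proof.
move=> yF -> x; rewrite mem_rcons inE => /orP[/eqP ->|]; first by rewrite eqxx.
by move/mem_rem.
Qed.

Lemma path_n b c : e' n b -> e' b c -> e' n c -> exists s, PathInv e' f' n b c s.
Proof.
rewrite !e'n => bF ebc cF.
have nbc : b != c by apply: contraTneq ebc => ->; exact: e'irr.
set s := filter (fun x => x \notin [:: b; c]) F.
have us : uniq s by exact: filter_uniq.
have sz : size s = 2.
  rewrite /s filter_size //.
  - by rewrite Fz.
  - by rewrite /= inE nbc.
  - by move=> x; rewrite !inE => /orP[] /eqP ->.
have sF : forall x, x \in s -> x \in F by move=> x; rewrite mem_filter => /andP[].
exists s; split => //.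
- by rewrite sz.
- move=> x; rewrite /s mem_filter e'n.
  case xF: (x \in F); rewrite ?andbF //= !e'E ?Fne // !Fadj //.
  by rewrite andbT !inE negb_or (eq_sym x b) (eq_sym x c).
- rewrite sz; apply: two_edges => //; last exact: e'irr.
  by move=> x z /sF xF /sF zF nxz; apply: e'W; apply: Fcl.
- move=> G /orP[/andP[fG _]|/hasP[y yF /eqP GE]] nG bG cG.
    case: (ifac I fG) => _ _ /allP aG _.
    by have := aG _ nG; rewrite ltnn.
  have remi : forall x, x \in F -> x != y -> x \in G.
    by move=> x xF nxy; rewrite GE mem_rcons inE (mem_rem_uniq _ Fu) !inE nxy xF orbT.
  have inrem : forall x, x \in G -> x != n -> x != y.
    move=> x; rewrite GE mem_rcons inE => /orP[/eqP->|]; first by rewrite eqxx.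
    by rewrite (mem_rem_uniq _ Fu) !inE => /andP[].
  have ys : y \in s.
    rewrite /s mem_filter yF !inE negb_or andbT.
    by rewrite !(eq_sym y) (inrem _ bG (Fne bF)) (inrem _ cG (Fne cF)).
  apply: (two_pick (y := y) (P := mem G)) => // w ws nwy.
  exact: remi (sF _ ws) nwy.
Qed.


Lemma path_old a b c : a != n -> b != n -> c != n ->
  e a b -> e b c -> e a c -> exists s, PathInv e' f' a b c s.
Proof.
move=> an bn cn eab ebc eac.
have [s0 Hs0] := ipath I eab ebc eac.
have sLt : forall s x, PathInv e f a b c s -> x \in s -> x < n.
  by move=> s x [_ _ ms _ _]; rewrite ms => /and3P[/eLr].
have sNe : forall s x, PathInv e f a b c s -> x \in s -> x != n.
  by move=> s x Hs /(sLt _ _ Hs); rewrite neq_ltn => ->.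
case: (boolP [&& a \in F, b \in F & c \in F]) => [/and3P[aF bF cF]|nF].
  have hl : (head 0 s0 \in F) || (last 0 s0 \in F) by case: Hs0 => _ _ _ _ H; apply: H.
  wlog hd : s0 Hs0 {hl} / head 0 s0 \in F.
    move=> W; case/orP: hl => h; first exact: W h.
    by apply: (W (rev s0)); [apply: PathInv_rev | rewrite head_rev].
  exists (n :: s0).
  have Hs := Hs0; case: Hs0 => us sz ms ed fa.
  have hds : head 0 s0 \in s0 by apply: head_in; lia.
  have nadj : forall x, x \in s0 -> [&& x != a, x != b & x != c].
    move=> x; rewrite ms => /and3P[h1 h2 h3].
    apply/and3P; split; apply/eqP => ex; [move: h1|move: h2|move: h3];
      rewrite ex; apply/negP; exact: (iirr I).
  have ul : uniq [:: a; b; c; head 0 s0].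
    case/and3P: (nadj _ hds) => h1 h2 h3.
    have nab : a != b by apply: contraTneq eab => ->; exact: (iirr I).
    have nac : a != c by apply: contraTneq eac => ->; exact: (iirr I).
    have nbc : b != c by apply: contraTneq ebc => ->; exact: (iirr I).
    by rewrite /= !inE !negb_or nab nac nbc !(eq_sym _ (head 0 s0)) h1 h2 h3.
  have FE : [:: a; b; c; head 0 s0] =i F.
    have sub : {subset [:: a; b; c; head 0 s0] <= F}.
      by move=> x; rewrite !inE => /or4P[] /eqP ->.
    by case: (uniq_min_size ul sub) => //; rewrite Fz.
  have key : forall x, x \in s0 -> (x \in F) = (x == head 0 s0).
    move=> x xs; rewrite -FE !inE; case/and3P: (nadj _ xs) => /negbTE -> /negbTE -> /negbTE ->.
    done.
  split.
  - rewrite /= us andbT; apply/negP => ns; move: (sNe _ n Hs ns); by rewrite eqxx.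
  - by rewrite /= ltnS ltnW.
  - move=> x; rewrite inE; case: (eqVneq x n) => [->|xn] /=.
      by rewrite !e'nr aF bF cF.
    by rewrite !e'E // ms.
  - case=> [|i] [|j] /= hi hj.
    + by rewrite (negbTE (e'irr _)).
    + rewrite e'n key ?mem_nth //; case: j hj {hi} => [|j] hj; first by rewrite /= eqxx.
      rewrite /= -[head 0 s0]/(nth 0 s0 0) nth_uniq //; exact: ltnW.
    + rewrite e'nr key ?mem_nth //; case: i hi {hj} => [|i] hi; first by rewrite /= -[nth 0 s0 0]/(head 0 s0) eqxx.
      rewrite /= -[head 0 s0]/(nth 0 s0 0) nth_uniq //; exact: ltnW.
    + have xs := mem_nth 0 hi; have ys := mem_nth 0 hj.
      by rewrite e'E ?(sNe _ _ Hs xs) ?(sNe _ _ Hs ys) // ed.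
  - move=> G /orP[/andP[fG GF]|/hasP[y yF /eqP GE]] aG bG cG; last first.
      by rewrite /= GE mem_rcons inE eqxx.
    case/orP: (fa G fG aG bG cG) => [hG|lG]; last by rewrite last_cons_ne ?lG ?orbT //; exact: ltnW.
    exfalso; move/negP: GF; apply.
    case: (ifac I fG) => sG zG _ _.
    have GE : [:: a; b; c; head 0 s0] =i G.
      have sub : {subset [:: a; b; c; head 0 s0] <= G}.
        by move=> x; rewrite !inE => /or4P[] /eqP ->.
      by case: (uniq_min_size ul sub) => //; rewrite zG.
    apply/eqP; apply: (irr_sorted_eq ltn_trans ltnn sG Fs) => x.
    by rewrite -GE FE.
exists s0; case: Hs0 => us sz ms ed fa; split => //.
- move=> x; case: (eqVneq x n) => [->|xn].
    have ns : n \notin s0.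
      by apply/negP => ns; move: (sNe _ n (And5 us sz ms ed fa) ns); rewrite eqxx.
    by rewrite !e'nr (negbTE ns) (negbTE nF).
  by rewrite !e'E // ms.
- move=> i j hi hj; have xs := mem_nth 0 hi; have ys := mem_nth 0 hj.
  rewrite e'E ?(sNe _ _ (And5 us sz ms ed fa) xs) ?(sNe _ _ (And5 us sz ms ed fa) ys) //.
  exact: ed.
- move=> G /orP[/andP[fG _]|/hasP[y yF /eqP GE]] aG bG cG; first exact: fa.
  by move: nF; rewrite (f'mem_new yF GE aG an) (f'mem_new yF GE bG bn) (f'mem_new yF GE cG cn).
Qed.

Lemma step_inv : Inv n.+1 (stack_edges n e F) (stack_facets n f F).
Proof.
split.
- exact: e'sym.
- exact: e'irr.
- exact: e'lt.
- exact: f'fac.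
- exact: f'chord.
- move=> a b c.
  case: (eqVneq a n) => [->|an]; first exact: path_n.
  case: (eqVneq b n) => [->|bn] => hab hbc hac.
    have hna : e' n a by rewrite e'sym.
    have [s Hs] := @path_n a c hna hac hbc.
    by exists s; apply: PathInv_sw12.
  case: (eqVneq c n) => [ec|cn].
    rewrite ec in hbc hac *.
    have hna : e' n a by rewrite e'sym.
    have hnb : e' n b by rewrite e'sym.
    have [s Hs] := @path_n a b hna hab hnb.
    by exists s; apply: PathInv_sw23; apply: PathInv_sw12.
  move: hab hbc hac; rewrite -[stack_edges n e F]/e' !e'E // => hab hbc hac.
  exact: path_old.
Qed.

End Step.

Lemma stacked_inv n e f : stacked4 n e f -> Inv n e f.
Proof.
elim=> [|m e0 f0 F _ IH fF]; first exact: base_inv.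
exact: step_inv.
Qed.

Lemma lift_induced (V W : finType) (E : rel V) (H : rel W) n (e : rel nat) (h : V -> nat) :
  injective h -> (forall i, i < n -> exists v, h v = i) ->
  (forall u v, E u v = e (h u) (h v)) ->
  forall g : W -> nat, injective g -> (forall w, g w < n) ->
  (forall a b, e (g a) (g b) = H a b) -> has_induced E H.
Proof.
move=> hinj hsurj hE g ginj glt gE.
have [phi hphi] := @fin_all_exists W (fun _ => V) (fun w v => h v = g w)
  (fun w => hsurj _ (glt w)).
exists phi; split.
  by move=> a b /(congr1 h); rewrite !hphi => /ginj.
by move=> a b; rewrite hE !hphi gE.
Qed.

Theorem lemma4p6 (V : finType) (E : rel V) :
  stacked4_polytopal_graph E ->
  (exists (G3 : rel 'I_3) (G6 : rel 'I_6),
      [/\ simple_graph G3, simple_graph G6 & has_induced E (gjoin G3 G6)]) ->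
  has_induced E (gjoin K3 P6).
Proof.
move=> [n [e [f [h [st hinj hlt hsurj hE]]]]] [G3 [G6 [[_ s3irr] _ [phi [phiinj phiE]]]]].
have I := stacked_inv st.
pose g := fun x => h (phi x).
have ginj : injective g by move=> x y /hinj /phiinj.
have gE : forall x y, e (g x) (g y) = gjoin G3 G6 x y by move=> x y; rewrite -hE phiE.
pose c i := g (inl i); pose w j := g (inr j).
have cw : forall i j, e (c i) (w j) by move=> i j; rewrite /c /w gE.
have wc : forall i j, e (w j) (c i) by move=> i j; rewrite (isym I) cw.
have cne : forall i j, i != j -> c i != c j.
  by move=> i j nij; apply: contra nij => /eqP /ginj [->].
have wne : forall i j, i != j -> w i != w j.
  by move=> i j nij; apply: contra nij => /eqP /ginj [->].
have winj : injective w by move=> i j /ginj [].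
have G3c : forall i j : 'I_3, i != j -> G3 i j.
  move=> i j nij; apply/negPn/negP => nG.
  have G6c : forall x y : 'I_6, x != y -> G6 x y.
    move=> x y nxy; apply/negPn/negP => nG6.
    have := ichord I (cw i x) (wc j x) (cw j y) (wc i y) (cne _ _ nij) (wne _ _ nxy).
    by rewrite /c /w !gE /= (negbTE nG) (negbTE nG6).
  pose o k (H : k < 6) := @Ordinal 6 k H.
  have e01 : e (w (o 0 isT)) (w (o 1 isT)) by rewrite /w gE /= G6c.
  have e12 : e (w (o 1 isT)) (w (o 2 isT)) by rewrite /w gE /= G6c.
  have e02 : e (w (o 0 isT)) (w (o 2 isT)) by rewrite /w gE /= G6c.
  have [s Hs] := ipath I e01 e12 e02.
  have ins : forall k (H : k < 6), 2 < k -> w (o k H) \in s.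
    move=> k H k2; case: Hs => _ _ -> _ _.
    by rewrite /w !gE /= !G6c //; apply/eqP => -[] ek; move: k2; rewrite -ek.
  apply: (PathInv_no3 (x := w (o 3 isT)) (y := w (o 4 isT)) (z := w (o 5 isT)) Hs).
  - exact: ins.
  - exact: ins.
  - exact: ins.
  - exact: wne.
  - exact: wne.
  - exact: wne.
  - by rewrite /w gE /= G6c.
  - by rewrite /w gE /= G6c.
  - by rewrite /w gE /= G6c.
pose i0 := @Ordinal 3 0 isT; pose i1 := @Ordinal 3 1 isT; pose i2 := @Ordinal 3 2 isT.
have e01 : e (c i0) (c i1) by rewrite /c gE /= G3c.
have e12 : e (c i1) (c i2) by rewrite /c gE /= G3c.
have e02 : e (c i0) (c i2) by rewrite /c gE /= G3c.
have [s [us sz ms ed fa]] := ipath I e01 e12 e02.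
have cs : forall i x, x \in s -> e (c i) x.
  move=> [[|[|[|k]]] Hk] x //; rewrite ms => /and3P[h0 h1 h2].
  - by rewrite (_ : Ordinal Hk = i0) //; apply: val_inj.
  - by rewrite (_ : Ordinal Hk = i1) //; apply: val_inj.
  - by rewrite (_ : Ordinal Hk = i2) //; apply: val_inj.
have ws : forall j, w j \in s by move=> j; rewrite ms !cw.
have sz6 : 6 <= size s.
  have sub : {subset map w (enum 'I_6) <= s} by move=> x /mapP [j _ ->]; exact: ws.
  have um : uniq (map w (enum 'I_6)) by rewrite map_inj_uniq // enum_uniq.
  have := uniq_leq_size um sub.
  by rewrite size_map size_enum_ord.
pose g' (x : 'I_3 + 'I_6) := match x with inl i => c i | inr j => nth 0 s j end.
have nths : forall j : 'I_6, nth 0 s j \in s.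
  by move=> j; apply: mem_nth; apply: leq_trans sz6.
apply: (lift_induced hinj hsurj hE (g := g')).
- case=> [i|i] [j|j] /=.
  + by move/ginj.
  + move=> eij; have := cs i _ (nths j); rewrite -eij.
    by rewrite (negbTE (iirr I _)).
  + move=> eij; have := cs j _ (nths i); rewrite eij.
    by rewrite (negbTE (iirr I _)).
  + move/eqP; rewrite nth_uniq //; try exact: leq_trans sz6.
    by move/eqP/val_inj ->.
- case=> [i|j] /=; first exact: hlt.
  by have := cs i0 _ (nths j); rewrite (isym I) => /(ibnd I).
- case=> [i|i] [j|j] /=.
  + rewrite /K3; case: (eqVneq i j) => [->|nij]; first exact/negbTE/(iirr I).
    by rewrite /c gE /= G3c.
  + exact: cs.
  + by rewrite (isym I) cs.
  + rewrite /P6 ed //; exact: leq_trans sz6.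
Qed.
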